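(* Let $\langle A, \leq, \otimes, \mathbf{1}\rangle$ be a finitely distributive semi-lattice monoid (respectively, a distributive complete lattice monoid), with bottom element $\bot$. For $k\geq1$ let $Lex_k(A)$, $\leq_k$, $\otimes^k$, $\mathbf{1}^k$ be defined by: $Lex_1(A) = A$, $Lex_{k+1}(A) = I(A)\, Lex_k(A) \cup C(A)\{\bot\}^k$; $\leq_1=\leq$ and for $k\geq2$, $a_1 \ldots a_k \leq_k b_1 \ldots b_k$ iff $a_1 < b_1$, or $a_1 = b_1$ and $a_2 \ldots a_k \leq_{k-1} b_2 \ldots b_k$; $\otimes^k$ is componentwise and $\mathbf{1}^k=\mathbf{1}\ldots\mathbf{1}$. Then for every $k\geq1$, $\langle Lex_k(A), \leq_k, \otimes^k, \mathbf{1}^k\rangle$ is a finitely distributive semi-lattice monoid (respectively, a distributive complete lattice monoid).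
   Context: A semi-lattice monoid (SLM) is $\langle A,\leq,\otimes,\mathbf{1}\rangle$ where $\langle A,\otimes,\mathbf{1}\rangle$ is a commutative monoid and $\langle A,\leq\rangle$ is a partial order in which every finite subset (including $\emptyset$, whose LUB is the bottom $\bot$) has a least upper bound $\bigvee X$; a complete lattice monoid (CLM) is the same with every subset having a LUB. An SLM is finitely distributive if $a\otimes\bigvee X=\bigvee\{a\otimes x\mid x\in X\}$ for all $a\in A$ and finite $X\subseteq A$; a CLM is distributive if this holds for all $X\subseteq A$. $a<b$ means $a\leq b$, $a\neq b$. $I(A) = \{c \in A \mid \forall a,b \in A.\ a \otimes c = b \otimes c \Rightarrow a = b\}$, $C(A)=A\setminus I(A)$. For sets of sequences, $XY$ denotes concatenations, and $\{\bot\}^k$ is the singleton of the sequence of $k$ copies of $\bot$. *)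

(* Defs.v *)
From Stdlib Require Import List.
Import ListNotations.
Set Implicit Arguments.

Section Defs.
Variable T : Type.

Definition is_lub (P : T -> Prop) (le : T -> T -> Prop) (X : T -> Prop) (l : T) : Prop :=
  P l /\ (forall x, X x -> le x l) /\
  (forall u, P u -> (forall x, X x -> le x u) -> le l u).

Record is_po_monoid (P : T -> Prop) (le : T -> T -> Prop) (mul : T -> T -> T) (one : T) : Prop := {
  le_refl : forall a, P a -> le a a;
  le_antisym : forall a b, P a -> P b -> le a b -> le b a -> a = b;
  le_trans : forall a b c, P a -> P b -> P c -> le a b -> le b c -> le a c;
  mul_closed : forall a b, P a -> P b -> P (mul a b);
  one_in : P one;
  mul_assoc : forall a b c, P a -> P b -> P c -> mul a (mul b c) = mul (mul a b) c;
  mul_comm : forall a b, P a -> P b -> mul a b = mul b a;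
  mul_one : forall a, P a -> mul a one = a
}.

(* finitely distributive semi-lattice monoid; finite subsets are given by lists *)
Definition is_fd_SLM (P : T -> Prop) le mul one : Prop :=
  is_po_monoid P le mul one /\
  (forall xs : list T, (forall x, In x xs -> P x) ->
     exists l, is_lub P le (fun x => In x xs) l) /\
  (forall a, P a -> forall xs : list T, (forall x, In x xs -> P x) ->
     forall l, is_lub P le (fun x => In x xs) l ->
       is_lub P le (fun y => In y (map (mul a) xs)) (mul a l)).

Definition is_d_CLM (P : T -> Prop) le mul one : Prop :=
  is_po_monoid P le mul one /\
  (forall X : T -> Prop, (forall x, X x -> P x) -> exists l, is_lub P le X l) /\
  (forall a, P a -> forall X : T -> Prop, (forall x, X x -> P x) ->
     forall l, is_lub P le X l ->
       is_lub P le (fun y => exists x, X x /\ y = mul a x) (mul a l)).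
End Defs.

Section Lex.
Variables (A : Type) (le : A -> A -> Prop) (mul : A -> A -> A) (one bot : A).

Definition lt (a b : A) : Prop := le a b /\ a <> b.

(* I(A): cancellable elements; C(A) its complement *)
Definition Icanc (c : A) : Prop := forall a b, mul a c = mul b c -> a = b.

Fixpoint Lex (k : nat) : list A -> Prop :=
  match k with
  | 0 => fun _ => False
  | S k' =>
    match k' with
    | 0 => fun s => exists a, s = [a]
    | _ => fun s =>
        (exists a t, s = a :: t /\ Icanc a /\ Lex k' t) \/
        (exists c, s = c :: repeat bot k' /\ ~ Icanc c)
    end
  end.

Fixpoint lexle (k : nat) (s t : list A) : Prop :=
  match k with
  | 0 => True
  | S k' =>
    match s, t with
    | a :: s', b :: t' =>
      match k' with
      | 0 => le a b
      | _ => lt a b \/ (a = b /\ lexle k' s' t')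
      end
    | _, _ => False
    end
  end.

Fixpoint lmul (s t : list A) : list A :=
  match s, t with
  | a :: s', b :: t' => mul a b :: lmul s' t'
  | _, _ => []
  end.

End Lex.

(* Main.v *)
Require Import Defs.
From Stdlib Require Import List Classical Lia.
Import ListNotations.

Definition finset {T : Type} (X : T -> Prop) : Prop :=
  exists xs : list T, forall x, X x <-> In x xs.
Definition allset {T : Type} (X : T -> Prop) : Prop := True.
Definition img {T U : Type} (f : T -> U) (X : T -> Prop) : U -> Prop :=
  fun y => exists x, X x /\ y = f x.

Record finclass (F : forall T : Type, (T -> Prop) -> Prop) : Prop := {
  F_img : forall T U (f : T -> U) X, F T X -> F U (img f X);
  F_sub : forall T X (Q : T -> Prop), F T X -> F T (fun x => X x /\ Q x);
  F_empty : forall T, F T (fun _ => False)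
}.

Definition SL (F : forall T : Type, (T -> Prop) -> Prop) {T : Type} (P : T -> Prop)
  (le : T -> T -> Prop) (mul : T -> T -> T) (one : T) : Prop :=
  is_po_monoid P le mul one /\
  (forall X, F T X -> (forall x, X x -> P x) -> exists l, is_lub P le X l) /\
  (forall a, P a -> forall X, F T X -> (forall x, X x -> P x) ->
     forall l, is_lub P le X l -> is_lub P le (img (mul a) X) (mul a l)).

Lemma is_lub_ext T (P : T -> Prop) le X Y l :
  (forall x, X x <-> Y x) -> is_lub P le X l -> is_lub P le Y l.
Proof.
  intros H [H1 [H2 H3]]. split; [|split]; auto.
  - intros x Hx; apply H2, H; auto.
  - intros u Pu Hu. apply H3; auto. intros x Hx; apply Hu, H; auto.
Qed.

Lemma is_lub_uniq T (P : T -> Prop) le mul one X l1 l2 :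
  is_po_monoid P le mul one -> is_lub P le X l1 -> is_lub P le X l2 -> l1 = l2.
Proof.
  intros Hpo [A1 [B1 C1]] [A2 [B2 C2]]. apply (le_antisym Hpo); auto.
Qed.

Lemma fc_all : finclass (@allset).
Proof. split; unfold allset; auto. Qed.

Lemma fc_fin : finclass (@finset).
Proof.
  split.
  - intros T U f X [xs Hxs]. exists (map f xs). intros y. unfold img. rewrite in_map_iff. split.
    + intros [x [Hx ->]]. exists x; split; auto; apply Hxs; auto.
    + intros [x [<- Hx]]. exists x; split; auto; apply Hxs; auto.
  - intros T X Q [xs Hxs].
    assert (H: forall ys : list T, exists zs, forall x, (In x ys /\ Q x) <-> In x zs).
    { induction ys as [|y ys [zs IH]].
      - exists []. simpl; tauto.
      - destruct (classic (Q y)) as [Hy|Hy].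
        + exists (y :: zs). intros x. simpl. rewrite <- IH.
          split; [intros [[<-|H1] H2]; auto | intros [<-|[H1 H2]]; auto].
        + exists zs. intros x. simpl. rewrite <- IH.
          split; [intros [[<-|H1] H2]; tauto | tauto]. }
    destruct (H xs) as [zs Hzs]. exists zs. intros x. rewrite <- Hzs, <- Hxs. tauto.
  - intros T. exists []. simpl. tauto.
Qed.

Lemma SL_fd T (P : T -> Prop) le mul one :
  SL (@finset) P le mul one <-> is_fd_SLM P le mul one.
Proof.
  split.
  - intros [H1 [H2 H3]]. split; [auto|split].
    + intros xs Hxs. apply H2; auto. exists xs; tauto.
    + intros a Ha xs Hxs l Hl. eapply is_lub_ext; [|apply (H3 a Ha (fun x => In x xs)); auto].
      * intros y. unfold img. rewrite in_map_iff. split.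
        -- intros [x [Hx ->]]. exists x; split; auto.
        -- intros [x [<- Hx]]. exists x; auto.
      * exists xs; tauto.
  - intros [H1 [H2 H3]]. split; [auto|split].
    + intros X [xs Hxs] HX. destruct (H2 xs) as [l Hl].
      * intros x Hx; apply HX, Hxs; auto.
      * exists l. eapply is_lub_ext; [|exact Hl]. intros x; rewrite Hxs; tauto.
    + intros a Ha X [xs Hxs] HX l Hl.
      assert (Hl' : is_lub P le (fun x => In x xs) l).
      { eapply is_lub_ext; [|exact Hl]. intros x; rewrite Hxs; tauto. }
      eapply is_lub_ext; [|apply (H3 a Ha xs); auto].
      * intros y. unfold img. rewrite in_map_iff. split.
        -- intros [x [<- Hx]]. exists x; split; auto; apply Hxs; auto.
        -- intros [x [Hx ->]]. exists x; split; auto; apply Hxs; auto.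
      * intros x Hx; apply HX, Hxs; auto.
Qed.

Lemma SL_d T (P : T -> Prop) le mul one :
  SL (@allset) P le mul one <-> is_d_CLM P le mul one.
Proof.
  unfold SL, is_d_CLM, allset, img. split; intros [H1 [H2 H3]]; split; auto.
Qed.
Section Main.
Variables (A : Type) (le : A -> A -> Prop) (mul : A -> A -> A) (one bot : A).
Variable F : forall T : Type, (T -> Prop) -> Prop.
Hypothesis HF : finclass F.
Hypothesis HA : SL F (fun _ : A => True) le mul one.

Lemma poA : is_po_monoid (fun _ : A => True) le mul one.
Proof. apply HA. Qed.

Lemma Icanc_mul a b : Icanc mul a -> Icanc mul b -> Icanc mul (mul a b).
Proof.
  intros Ha Hb x y H. apply Ha, Hb.
  rewrite <- !(mul_assoc poA); auto.
Qed.

Lemma Icanc_mul_r a b : Icanc mul (mul a b) -> Icanc mul a.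
Proof.
  intros H x y Hxy. apply H. rewrite !(mul_assoc poA); auto. rewrite Hxy; auto.
Qed.

Lemma Icanc_mul_l a b : Icanc mul (mul a b) -> Icanc mul b.
Proof.
  intros H. apply (Icanc_mul_r b a). rewrite (mul_comm poA); auto.
Qed.

Lemma Icanc_one : Icanc mul one.
Proof. intros x y H. rewrite !(mul_one poA) in H; auto. Qed.

Definition L1 := Lex mul bot 1.

Lemma L1_iff s : L1 s <-> exists a, s = [a].
Proof. reflexivity. Qed.

Lemma base_lub X m : (forall x, X x -> L1 x) ->
  is_lub (fun _ => True) le (img (hd bot) X) m -> is_lub L1 (lexle le 1) X [m].
Proof.
  intros HX [_ [Hm1 Hm2]]. split; [|split].
  - exists m; auto.
  - intros x Hx. destruct (HX x Hx) as [a ->]. simpl. apply Hm1. exists [a]; auto.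
  - intros u [b ->] Hu. simpl. apply Hm2; auto.
    intros y [x [Hx ->]]. destruct (HX x Hx) as [a ->]. exact (Hu _ Hx).
Qed.

Lemma base_lub_inv X m : (forall x, X x -> L1 x) ->
  is_lub L1 (lexle le 1) X [m] -> is_lub (fun _ => True) le (img (hd bot) X) m.
Proof.
  intros HX [_ [Hm1 Hm2]]. split; [auto|split].
  - intros y [x [Hx ->]]. destruct (HX x Hx) as [a ->]. exact (Hm1 _ Hx).
  - intros u _ Hu. apply (Hm2 [u]). exists u; auto.
    intros x Hx. destruct (HX x Hx) as [a ->]. simpl. apply Hu. exists [a]; auto.
Qed.

Lemma base : SL F L1 (lexle le 1) (lmul mul) [one].
Proof.
  destruct HA as [po [lubs dist]]. split; [split|split].
  - intros s [a ->]. simpl. apply (le_refl po); auto.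
  - intros s t [a ->] [b ->]. simpl. intros. f_equal. apply (le_antisym po); auto.
  - intros s t u [a ->] [b ->] [c ->]. simpl. intros. apply (le_trans po) with b; auto.
  - intros s t [a ->] [b ->]. exists (mul a b). reflexivity.
  - exists one; auto.
  - intros s t u [a ->] [b ->] [c ->]. simpl. f_equal. apply (mul_assoc po); auto.
  - intros s t [a ->] [b ->]. simpl. f_equal. apply (mul_comm po); auto.
  - intros s [a ->]. simpl. f_equal. apply (mul_one po); auto.
  - intros X FX HX. destruct (lubs (img (hd bot) X)) as [m Hm]; auto.
    + apply (F_img _ HF); auto.
    + exists [m]. apply base_lub; auto.
  - intros s [c ->] X FX HX l Hl.
    destruct (proj1 Hl) as [m ->].
    pose proof (base_lub_inv X m HX Hl) as Hm.
    assert (HY : forall y, img (lmul mul [c]) X y -> L1 y).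
    { intros y [x [Hx ->]]. destruct (HX x Hx) as [a ->]. exists (mul c a); reflexivity. }
    apply base_lub; auto.
    eapply is_lub_ext; [|apply (dist c I (img (hd bot) X)); auto].
    + intros y. split.
      * intros [a [[x [Hx ->]] ->]]. destruct (HX x Hx) as [b ->].
        exists (lmul mul [c] [b]). split; [exists [b]; auto | reflexivity].
      * intros [s [[x [Hx ->]] ->]]. destruct (HX x Hx) as [b ->].
        exists b. split; [exists [b]; auto | reflexivity].
    + apply (F_img _ HF); auto.
Qed.
Section Step.
Variables (P' : list A -> Prop) (le' : list A -> list A -> Prop) (one' z : list A).
Hypothesis HB : SL F P' le' (lmul mul) one'.
Hypothesis Hz : P' z.
Hypothesis Hzb : forall t, P' t -> le' z t.

Definition Pn (s : list A) : Prop :=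
  (exists a t, s = a :: t /\ Icanc mul a /\ P' t) \/
  (exists c, s = c :: z /\ ~ Icanc mul c).

Definition len (s t : list A) : Prop :=
  match s, t with
  | a :: s', b :: t' => lt le a b \/ (a = b /\ le' s' t')
  | _, _ => False
  end.

Lemma Pn_iff s : Pn s <-> exists a t, s = a :: t /\ P' t /\ (~ Icanc mul a -> t = z).
Proof.
  split.
  - intros [[a [t [-> [H1 H2]]]]|[c [-> H]]].
    + exists a, t. repeat split; auto. tauto.
    + exists c, z. auto.
  - intros [a [t [-> [H1 H2]]]]. destruct (classic (Icanc mul a)).
    + left. exists a, t. auto.
    + right. exists a. rewrite H2; auto.
Qed.

Lemma poB : is_po_monoid P' le' (lmul mul) one'.
Proof. apply HB. Qed.

Lemma zmul t : P' t -> lmul mul t z = z /\ lmul mul z t = z.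
Proof.
  intros Ht. destruct HB as [po [_ dist]].
  assert (Hl : is_lub P' le' (fun _ => False) z).
  { split; [auto|split]; [tauto|]. intros u Hu _. auto. }
  pose proof (dist t Ht (fun _ => False) (F_empty _ HF _) (fun _ H => False_ind _ H) z Hl) as H.
  assert (E : lmul mul t z = z).
  { eapply is_lub_uniq; [exact po| |exact Hl]. eapply is_lub_ext; [|exact H].
    intros x; split; [intros [y [[] _]]|tauto]. }
  split; auto. rewrite (mul_comm po); auto.
Qed.

Lemma len_le a s b t : len (a :: s) (b :: t) -> le a b.
Proof.
  intros [[H _]|[-> _]]; auto. apply (le_refl poA); auto.
Qed.

Lemma po_step : is_po_monoid Pn len (lmul mul) (one :: one').
Proof.
  pose proof poA as pa. pose proof poB as pb. split.
  - intros s Hs. apply Pn_iff in Hs as [a [t [-> [Ht _]]]]. right. split; auto.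
    apply (le_refl pb); auto.
  - intros s t Hs Ht. apply Pn_iff in Hs as [a [s' [-> [Hs' _]]]].
    apply Pn_iff in Ht as [b [t' [-> [Ht' _]]]].
    intros [[H1 H2]|[H1 H2]] [[H3 H4]|[H3 H4]].
    + exfalso. apply H2. apply (le_antisym pa); auto.
    + congruence.
    + congruence.
    + subst. f_equal. apply (le_antisym pb); auto.
  - intros s t u Hs Ht Hu. apply Pn_iff in Hs as [a [s' [-> [Hs' _]]]].
    apply Pn_iff in Ht as [b [t' [-> [Ht' _]]]].
    apply Pn_iff in Hu as [c [u' [-> [Hu' _]]]].
    intros [[H1 H2]|[H1 H2]] [[H3 H4]|[H3 H4]].
    + left. split. apply (le_trans pa) with b; auto.
      intros ->. apply H2. apply (le_antisym pa); auto.
    + subst. left. split; auto.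
    + subst. left. split; auto.
    + subst. right. split; auto. apply (le_trans pb) with t'; auto.
  - intros s t Hs Ht. apply Pn_iff in Hs as [a [s' [-> [Hs' Ha]]]].
    apply Pn_iff in Ht as [b [t' [-> [Ht' Hb]]]].
    apply Pn_iff. exists (mul a b), (lmul mul s' t'). split; [reflexivity|split].
    + apply (mul_closed pb); auto.
    + intros Hab. destruct (classic (Icanc mul a)) as [Ia|Ia].
      * destruct (classic (Icanc mul b)) as [Ib|Ib].
        -- exfalso. apply Hab. apply Icanc_mul; auto.
        -- rewrite (Hb Ib). apply zmul; auto.
      * rewrite (Ha Ia). apply zmul; auto.
  - apply Pn_iff. exists one, one'. split; [reflexivity|split].
    + apply (one_in pb).
    + intros H. exfalso. apply H, Icanc_one.
  - intros s t u Hs Ht Hu. apply Pn_iff in Hs as [a [s' [-> [Hs' _]]]].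
    apply Pn_iff in Ht as [b [t' [-> [Ht' _]]]].
    apply Pn_iff in Hu as [c [u' [-> [Hu' _]]]].
    simpl. f_equal. apply (mul_assoc pa); auto. apply (mul_assoc pb); auto.
  - intros s t Hs Ht. apply Pn_iff in Hs as [a [s' [-> [Hs' _]]]].
    apply Pn_iff in Ht as [b [t' [-> [Ht' _]]]].
    simpl. f_equal. apply (mul_comm pa); auto. apply (mul_comm pb); auto.
  - intros s Hs. apply Pn_iff in Hs as [a [s' [-> [Hs' _]]]].
    simpl. f_equal. apply (mul_one pa); auto. apply (mul_one pb); auto.
Qed.

Lemma ub_head X m u : (forall x, X x -> Pn x) ->
  is_lub (fun _ => True) le (img (hd bot) X) m -> Pn u ->
  (forall x, X x -> len x u) -> le m (hd bot u).
Proof.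
  intros HX [_ [_ Hm]] Hu Hub. apply Hm; auto.
  apply Pn_iff in Hu as [b [w [-> _]]].
  intros y [x [Hx ->]]. pose proof (HX x Hx) as Px.
  apply Pn_iff in Px as [a [t [-> _]]]. simpl. exact (len_le _ _ _ _ (Hub _ Hx)).
Qed.

Lemma lub_nc X m : (forall x, X x -> Pn x) ->
  is_lub (fun _ => True) le (img (hd bot) X) m -> ~ Icanc mul m ->
  is_lub Pn len X (m :: z).
Proof.
  intros HX Hm Im. split; [|split].
  - apply Pn_iff. exists m, z. auto.
  - intros x Hx. pose proof (HX x Hx) as Px.
    apply Pn_iff in Px as [a [t [-> [Ht Ha]]]].
    assert (le a m). { apply Hm; auto. exists (a :: t); auto. }
    destruct (classic (a = m)) as [->|Ne].
    + right. split; [reflexivity|]. rewrite (Ha Im). apply (le_refl poB); auto.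
    + left. split; auto.
  - intros u Hu Hub. pose proof (ub_head X m u HX Hm Hu Hub) as Hle.
    apply Pn_iff in Hu as [b [w [-> [Hw Hb]]]]. simpl in Hle.
    destruct (classic (m = b)) as [<-|Ne].
    + right. split; [reflexivity|]. rewrite (Hb Im). apply (le_refl poB); auto.
    + left. split; auto.
Qed.

Definition tails (X : list A -> Prop) (m : A) := img (@tl A) (fun s => X s /\ hd bot s = m).

Lemma tails_P X m : (forall x, X x -> Pn x) -> forall t, tails X m t -> P' t.
Proof.
  intros HX t [x [[Hx _] ->]]. pose proof (HX x Hx) as Px.
  apply Pn_iff in Px as [a [t' [-> [Ht _]]]]. exact Ht.
Qed.

Lemma lub_c X m w : (forall x, X x -> Pn x) ->
  is_lub (fun _ => True) le (img (hd bot) X) m -> Icanc mul m ->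
  is_lub P' le' (tails X m) w -> is_lub Pn len X (m :: w).
Proof.
  intros HX Hm Im Hw. split; [|split].
  - apply Pn_iff. exists m, w. split; auto. split; [apply Hw|tauto].
  - intros x Hx. pose proof (HX x Hx) as Px.
    apply Pn_iff in Px as [a [t [-> [Ht Ha]]]].
    assert (le a m). { apply Hm; auto. exists (a :: t); auto. }
    destruct (classic (a = m)) as [->|Ne].
    + right. split; auto. apply Hw. exists (m :: t). auto.
    + left. split; auto.
  - intros u Hu Hub. pose proof (ub_head X m u HX Hm Hu Hub) as Hle.
    apply Pn_iff in Hu as [b [w' [-> [Hw' Hb]]]]. simpl in Hle.
    destruct (classic (m = b)) as [<-|Ne].
    + right. split; auto. apply Hw; auto.
      intros t [x [[Hx Hhd] ->]]. pose proof (HX x Hx) as Px.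
      apply Pn_iff in Px as [a [t' [-> _]]]. simpl in Hhd |- *. subst a.
      destruct (Hub _ Hx) as [[_ H]|[_ H]]; [congruence|exact H].
    + left. split; auto.
Qed.

Lemma step : SL F Pn len (lmul mul) (one :: one').
Proof.
  pose proof po_step as pn.
  destruct HA as [pa [lubA distA]]. destruct HB as [pb [lubB distB]].
  assert (Hex : forall X, F _ X -> (forall x, X x -> Pn x) -> exists l, is_lub Pn len X l).
  { intros X FX HX. destruct (lubA (img (hd bot) X)) as [m Hm]; auto.
    { apply (F_img _ HF); auto. }
    destruct (classic (Icanc mul m)) as [Im|Im].
    - destruct (lubB (tails X m)) as [w Hw].
      + apply (F_img _ HF), (F_sub _ HF); auto.
      + apply tails_P; auto.
      + exists (m :: w). apply lub_c; auto.
    - exists (m :: z). apply lub_nc; auto. }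
  split; [exact pn|split; [exact Hex|]].
  intros a0 Ha0 X FX HX l Hl.
  assert (HY : forall y, img (lmul mul a0) X y -> Pn y).
  { intros y [x [Hx ->]]. apply (mul_closed pn); auto. }
  apply Pn_iff in Ha0 as [c [r [-> [Hr Hc]]]].
  destruct (lubA (img (hd bot) X)) as [m Hm]; auto.
  { apply (F_img _ HF); auto. }
  assert (HmY : is_lub (fun _ => True) le (img (hd bot) (img (lmul mul (c :: r)) X)) (mul c m)).
  { eapply is_lub_ext; [|apply (distA c I (img (hd bot) X)); auto].
    - intros y. split.
      + intros [a [[x [Hx ->]] ->]]. pose proof (HX x Hx) as Px.
        apply Pn_iff in Px as [b [t [-> _]]].
        exists (lmul mul (c :: r) (b :: t)). split; [exists (b :: t); auto|reflexivity].
      + intros [s [[x [Hx ->]] ->]]. pose proof (HX x Hx) as Px.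
        apply Pn_iff in Px as [b [t [-> _]]].
        exists b. split; [exists (b :: t); auto|reflexivity].
    - apply (F_img _ HF); auto. }
  destruct (classic (Icanc mul m)) as [Im|Im].
  - destruct (lubB (tails X m)) as [w Hw].
    + apply (F_img _ HF), (F_sub _ HF); auto.
    + apply tails_P; auto.
    + assert (El : l = m :: w).
      { eapply is_lub_uniq; [exact pn|exact Hl|]. apply lub_c; auto. }
      subst l. destruct (classic (Icanc mul c)) as [Ic|Ic].
      * simpl. apply lub_c; auto.
        -- apply Icanc_mul; auto.
        -- eapply is_lub_ext; [|apply (distB r Hr (tails X m)); auto].
           ++ intros y. split.
              ** intros [t [[x [[Hx Hhd] ->]] ->]]. pose proof (HX x Hx) as Px.
                 apply Pn_iff in Px as [b [t' [-> _]]]. simpl in Hhd. subst b.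
                 exists (lmul mul (c :: r) (m :: t')). split; [|reflexivity].
                 split; [exists (m :: t'); auto|reflexivity].
              ** intros [s [[[x [Hx ->]] Hhd] ->]]. pose proof (HX x Hx) as Px.
                 apply Pn_iff in Px as [b [t' [-> _]]]. simpl in Hhd.
                 assert (b = m).
                 { apply Ic. rewrite (mul_comm pa b), (mul_comm pa m); auto. }
                 subst b. exists t'. split; [|reflexivity].
                 exists (m :: t'). auto.
           ++ apply (F_img _ HF), (F_sub _ HF); auto.
           ++ apply tails_P; auto.
      * assert (E : lmul mul (c :: r) (m :: w) = mul c m :: z).
        { rewrite (Hc Ic). simpl. rewrite (proj2 (zmul w (proj1 Hw))). reflexivity. }
        rewrite E. apply lub_nc; [exact HY|exact HmY|]. intros H. exact (Ic (Icanc_mul_r _ _ H)).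
  - assert (El : l = m :: z).
    { eapply is_lub_uniq; [exact pn|exact Hl|]. apply lub_nc; auto. }
    subst l. simpl. rewrite (proj1 (zmul r Hr)).
    apply lub_nc; [exact HY|exact HmY|]. intros H. exact (Im (Icanc_mul_l _ _ H)).
Qed.

End Step.
End Main.

Lemma Lex_SS A (mul : A -> A -> A) bot n s :
  Lex mul bot (S (S n)) s =
  ((exists a t, s = a :: t /\ Icanc mul a /\ Lex mul bot (S n) t) \/
   (exists c, s = c :: repeat bot (S n) /\ ~ Icanc mul c)).
Proof. reflexivity. Qed.

Lemma bot_rep A (le : A -> A -> Prop) (mul : A -> A -> A) bot
  (Hbot : is_lub (fun _ : A => True) le (fun _ : A => False) bot) n :
  Lex mul bot (S n) (repeat bot (S n)) /\
  forall t, Lex mul bot (S n) t -> lexle le (S n) (repeat bot (S n)) t.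
Proof.
  assert (Hb : forall a, le bot a).
  { intros a. apply Hbot; auto. intros x []. }
  induction n as [|n [IH1 IH2]].
  - split. exists bot; reflexivity. intros t [a ->]. simpl. apply Hb.
  - split.
    + rewrite Lex_SS. destruct (classic (Icanc mul bot)).
      * left. exists bot, (repeat bot (S n)). auto.
      * right. exists bot. auto.
    + intros t Ht. rewrite Lex_SS in Ht.
      assert (exists a t', t = a :: t' /\ Lex mul bot (S n) t') as [a [t' [-> Ht']]].
      { destruct Ht as [[a [t' [-> [_ H]]]]|[c [-> _]]]; eauto. }
      change (lt le bot a \/ (bot = a /\ lexle le (S n) (repeat bot (S n)) t')).
      destruct (classic (bot = a)) as [<-|Ne].
      * right. auto.
      * left. split; auto.
Qed.

Lemma main_SL A (le : A -> A -> Prop) (mul : A -> A -> A) (one bot : A)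
  (Hbot : is_lub (fun _ : A => True) le (fun _ : A => False) bot)
  F (HF : finclass F) (HA : SL F (fun _ : A => True) le mul one) n :
  SL F (Lex mul bot (S n)) (lexle le (S n)) (lmul mul) (repeat one (S n)).
Proof.
  induction n as [|n IH].
  - exact (base A le mul one bot F HF HA).
  - destruct (bot_rep A le mul bot Hbot n) as [H1 H2].
    exact (step A le mul one bot F HF HA (Lex mul bot (S n)) (lexle le (S n))
             (repeat one (S n)) (repeat bot (S n)) IH H1 H2).
Qed.

Theorem theorem1 (A : Type) (le : A -> A -> Prop) (mul : A -> A -> A) (one bot : A)
  (Hbot : is_lub (fun _ : A => True) le (fun _ : A => False) bot) :
  (is_fd_SLM (fun _ : A => True) le mul one ->
     forall k : nat, 1 <= k ->
       is_fd_SLM (Lex mul bot k) (lexle le k) (lmul mul) (repeat one k)) /\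
  (is_d_CLM (fun _ : A => True) le mul one ->
     forall k : nat, 1 <= k ->
       is_d_CLM (Lex mul bot k) (lexle le k) (lmul mul) (repeat one k)).
Proof.
  split; intros H k Hk; (destruct k as [|n]; [lia|]).
  - apply SL_fd. apply main_SL; auto. exact fc_fin. apply SL_fd; auto.
  - apply SL_d. apply main_SL; auto. exact fc_all. apply SL_d; auto.
Qed.
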